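(* Let $K=\{k_0,k_1,\dots,k_n\}$ be a finite set of social alternatives and $K_*=K\setminus\{k_0\}$. Let $T_1,T_2$ be finite type sets with $\min\{|T_1|,|T_2|\}=2$, let $T=T_1\times T_2$, and let $\lambda$ be a probability measure on $T$ with $\lambda(t)>0$ for all $t\in T$ which is the product of its marginals $\lambda_1$ on $T_1$ and $\lambda_2$ on $T_2$. Let $Q=(Q_1,Q_2)$ with $Q_i:K\times T_i\to\mathbb{R}$ be an interim allocation rule satisfying $\sum_{k\in K}Q_i^k(t_i)=1$ for all $t_i\in T_i$, $i=1,2$ (i.e. $Q_i^{k_0}(t_i)=1-\sum_{k\in K_*}Q_i^k(t_i)$). Then $Q$ is implementable if and only if the following three conditions hold: (a) $\sum_{t_1\in T_1}Q_1^k(t_1)\lambda_1(t_1)-\sum_{t_2\in T_2}Q_2^k(t_2)\lambda_2(t_2)=0$ for all $k\in K_*$; (b) $Q_i^k(t_i)\ge 0$ for all $k\in K_*$, $t_i\in T_i$, $i=1,2$; (c) for all $G\subseteq K_*$, $E_1\subseteq T_1$ and $E_2\subseteq T_2$, $$\sum_{k\in G}\Big[\sum_{t_1\in E_1}Q_1^k(t_1)\lambda_1(t_1)-\sum_{t_2\in E_2}Q_2^k(t_2)\lambda_2(t_2)\Big]\le \lambda\big(E_1\times (T_2\setminus E_2)\big).$$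
   Context: An ex post allocation rule $q:K\times T\to\mathbb{R}$ is feasible if $q\ge 0$ and $\sum_{k\in K}q^k(t)=1$ for all $t\in T$. An interim allocation rule $Q=(Q_1,Q_2)$, $Q_i:K\times T_i\to\mathbb{R}$, is implementable if there exists a feasible ex post allocation rule $q$ with $Q_i^k(t_i)=\sum_{t_{-i}\in T_{-i}}q^k(t)\lambda_{-i}(t_{-i})$ for all $i\in\{1,2\}$, $t_i\in T_i$, $k\in K$ (where $-i$ denotes the other player and $t=(t_i,t_{-i})$). For $E\subseteq T$, $\lambda(E)=\sum_{t\in E}\lambda(t)$. *)

(* Defs.v *)
From mathcomp Require Import all_boot all_order all_algebra.
From mathcomp Require Import reals.
Set Implicit Arguments. Unset Strict Implicit. Unset Printing Implicit Defensive.
Import Order.TTheory GRing.Theory Num.Theory.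
Local Open Scope ring_scope.

Section Defs.
Variables (R : realType) (T1 T2 : finType).

Definition marg1 (lam : T1 * T2 -> R) (t1 : T1) : R := \sum_(t2 : T2) lam (t1, t2).
Definition marg2 (lam : T1 * T2 -> R) (t2 : T2) : R := \sum_(t1 : T1) lam (t1, t2).

Definition measT (lam : T1 * T2 -> R) (E : {set T1 * T2}) : R := \sum_(t in E) lam t.

Variable K : finType.

Definition feasible (q : K -> T1 * T2 -> R) : Prop :=
  (forall k t, 0 <= q k t) /\ (forall t, \sum_(k : K) q k t = 1).

Definition implementable (lam : T1 * T2 -> R)
    (Q1 : K -> T1 -> R) (Q2 : K -> T2 -> R) : Prop :=
  exists q : K -> T1 * T2 -> R, feasible q /\
    (forall k t1, Q1 k t1 = \sum_(t2 : T2) q k (t1, t2) * marg2 lam t2) /\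
    (forall k t2, Q2 k t2 = \sum_(t1 : T1) q k (t1, t2) * marg1 lam t1).
End Defs.

(* Main.v *)
Require Import Defs.
From mathcomp Require Import all_boot all_order all_algebra.
From mathcomp Require Import reals.
From mathcomp Require Import ring lra zify.
Import Order.TTheory GRing.Theory Num.Theory.
Local Open Scope ring_scope.

Module Aux.
Set Implicit Arguments. Unset Strict Implicit. Unset Printing Implicit Defensive.

Section Helpers.
Variable R : realFieldType.
Variable T : finType.

Lemma sum_delta (F : T -> R) i0 : \sum_i ((i == i0)%:R * F i) = F i0.
Proof.
rewrite (bigD1 i0) //= eqxx mul1r big1 ?addr0 // => i /negbTE ->; by rewrite mul0r.
Qed.

Lemma sum_delta1 (i0 : T) : \sum_i ((i == i0)%:R : R) = 1.
Proof.
rewrite -[RHS](sum_delta (fun _ : T => 1) i0); apply: eq_bigr => i _; by rewrite mulr1.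
Qed.

Lemma sum_in (A : {set T}) (F : T -> R) : \sum_(i in A) F i = \sum_i ((i \in A)%:R * F i).
Proof. rewrite big_mkcond; apply: eq_bigr => i _; case: (i \in A); rewrite /= ?mul1r ?mul0r //. Qed.
End Helpers.

Section Flow.
Variable R : realFieldType.
Variables I J : finType.
Notation ind b := ((nat_of_bool b)%:R : R).

Definition ff (c : I -> J -> R) (al : I -> R) (be : J -> R) (A : {set I}) (B : {set J}) : R :=
  \sum_j ind (j \in B) * be j
  + \sum_i \sum_j ind (i \in A) * ind (j \notin B) * c i j
  - \sum_i ind (i \in A) * al i.

Definition flow_sol c al be (y : I -> J -> R) :=
  [/\ forall i j, 0 <= y i j <= c i j, forall i, \sum_j y i j = al i
    & forall j, \sum_i y i j = be j].

Lemma flow0 c al be : (forall i j, c i j = 0) -> \sum_i al i = \sum_j be j ->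
  (forall A B, 0 <= ff c al be A B) -> exists y, flow_sol c al be y.
Proof.
move=> c0 Hs Hf.
have ffc A B : ff c al be A B = \sum_j ind (j \in B) * be j - \sum_i ind (i \in A) * al i.
  rewrite /ff; congr (_ - _); rewrite [X in _ + X]big1 ?addr0 // => i _.
  by rewrite big1 // => j _; rewrite c0 mulr0.
have ale i : al i <= 0.
  have := Hf [set i] set0; rewrite ffc big1; last by move=> j _; rewrite in_set0 mul0r.
  under eq_bigr => i' _ do rewrite in_set1.
  rewrite sum_delta; lra.
have bge j : 0 <= be j.
  have := Hf set0 [set j]; rewrite ffc [X in _ - X]big1; last by move=> i' _; rewrite in_set0 mul0r.
  under eq_bigr => j' _ do rewrite in_set1.
  rewrite sum_delta; lra.
have sb : 0 <= \sum_j be j by apply: sumr_ge0.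
have sa : \sum_i al i <= 0.
  have := @ler_sum _ I (index_enum I) predT al (fun _ => 0) (fun i _ => ale i).
  by rewrite big1_eq.
have al0 i : al i = 0.
  have := @psumr_eq0P _ _ predT (fun i => - al i) (fun i _ => ltac:(rewrite oppr_ge0; exact: ale)).
  rewrite sumrN => H; apply/eqP; rewrite -oppr_eq0; apply/eqP; apply: H => //; lra.
have be0 j : be j = 0.
  have := @psumr_eq0P _ _ predT be (fun i _ => bge i).
  move=> H; apply: H => //; lra.
exists (fun _ _ => 0); split => [i j|i|j].
- by rewrite c0 lexx.
- by rewrite big1 // al0.
- by rewrite big1 // be0.
Qed.

Lemma ff_upd c al be A B (i0 : I) (j0 : J) th ce :
  ff (fun i j => c i j - ce * (ind (i == i0) * ind (j == j0)))
     (fun i => al i - th * ind (i == i0)) (fun j => be j - th * ind (j == j0)) A B =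
  ff c al be A B - th * ind (j0 \in B) + th * ind (i0 \in A)
    - ce * (ind (i0 \in A) * ind (j0 \notin B)).
Proof.
rewrite /ff.
have E1 : \sum_j ind (j \in B) * (be j - th * ind (j == j0)) =
          \sum_j ind (j \in B) * be j - th * ind (j0 \in B).
  have -> : ind (j0 \in B) = \sum_j ind (j == j0) * ind (j \in B) by rewrite sum_delta.
  rewrite mulr_sumr -sumrB; apply: eq_bigr => j _; ring.
have E3 : \sum_i ind (i \in A) * (al i - th * ind (i == i0)) =
          \sum_i ind (i \in A) * al i - th * ind (i0 \in A).
  have -> : ind (i0 \in A) = \sum_i ind (i == i0) * ind (i \in A) by rewrite sum_delta.
  rewrite mulr_sumr -sumrB; apply: eq_bigr => j _; ring.
have E2 : \sum_i \sum_j ind (i \in A) * ind (j \notin B) *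
            (c i j - ce * (ind (i == i0) * ind (j == j0))) =
          \sum_i \sum_j ind (i \in A) * ind (j \notin B) * c i j
           - ce * (ind (i0 \in A) * ind (j0 \notin B)).
  have -> : ind (j0 \notin B) = \sum_j ind (j == j0) * ind (j \notin B) by rewrite sum_delta.
  have -> : ind (i0 \in A) * (\sum_j ind (j == j0) * ind (j \notin B)) =
     \sum_i ind (i == i0) * (ind (i \in A) * \sum_j ind (j == j0) * ind (j \notin B)).
    by rewrite (sum_delta (fun i => ind (i \in A) * \sum_j ind (j == j0) * ind (j \notin B))).
  rewrite mulr_sumr -sumrB; apply: eq_bigr => i _.
  rewrite !mulr_sumr -sumrB; apply: eq_bigr => j _; ring.
rewrite E1 E2 E3; ring.
Qed.

Lemma ff_submod c al be (A A' : {set I}) (B B' : {set J}) (i0 : I) (j0 : J) :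
  (forall i j, 0 <= c i j) ->
  i0 \notin A -> j0 \in B -> i0 \in A' -> j0 \notin B' ->
  c i0 j0 + ff c al be (A :|: A') (B :|: B') + ff c al be (A :&: A') (B :&: B')
   <= ff c al be A B + ff c al be A' B'.
Proof.
move=> c0 nA B0 A0 nB.
rewrite /ff.
have Eb : \sum_j ind (j \in B :|: B') * be j + \sum_j ind (j \in B :&: B') * be j =
          \sum_j ind (j \in B) * be j + \sum_j ind (j \in B') * be j.
  rewrite -!big_split; apply: eq_bigr => j _ /=; rewrite in_setU in_setI.
  by case: (j \in B); case: (j \in B') => /=; ring.
have Ea : \sum_i ind (i \in A :|: A') * al i + \sum_i ind (i \in A :&: A') * al i =
          \sum_i ind (i \in A) * al i + \sum_i ind (i \in A') * al i.
  rewrite -!big_split; apply: eq_bigr => j _ /=; rewrite in_setU in_setI.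
  by case: (j \in A); case: (j \in A') => /=; ring.
have Ec : c i0 j0 = \sum_i \sum_j ind (i == i0) * ind (j == j0) * c i j.
  rewrite -(sum_delta (fun i => c i j0) i0); apply: eq_bigr => i _.
  rewrite -(sum_delta (fun j => c i j) j0) mulr_sumr; apply: eq_bigr => j _; ring.
have Hc : \sum_i \sum_j ind (i == i0) * ind (j == j0) * c i j
     + \sum_i \sum_j ind (i \in A :|: A') * ind (j \notin B :|: B') * c i j
     + \sum_i \sum_j ind (i \in A :&: A') * ind (j \notin B :&: B') * c i j
   <= \sum_i \sum_j ind (i \in A) * ind (j \notin B) * c i j
     + \sum_i \sum_j ind (i \in A') * ind (j \notin B') * c i j.
  rewrite -!big_split /=; apply: ler_sum => i _; rewrite -!big_split /=.
  apply: ler_sum => j _; rewrite !in_setU !in_setI ?negb_or ?negb_and.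
  have [->|ni] := eqVneq i i0; have [->|nj] := eqVneq j j0.
  - rewrite (negbTE nA) B0 A0 (negbTE nB) /=; have := c0 i0 j0; lra.
  - rewrite (negbTE nA) A0 /=; have := c0 i0 j; case: (j \in B); case: (j \in B') => /=; lra.
  - rewrite B0 (negbTE nB) /=; have := c0 i j0; case: (i \in A); case: (i \in A') => /=; lra.
  - have := c0 i j; case: (i \in A); case: (i \in A'); case: (j \in B); case: (j \in B') => /=; lra.
lra.
Qed.


Lemma flow n : forall (c : I -> J -> R) (al : I -> R) (be : J -> R), (#|[set p : I * J | c p.1 p.2 != 0%R]| <= n)%N ->
  (forall i j, 0 <= c i j) -> \sum_i al i = \sum_j be j ->
  (forall A B, 0 <= ff c al be A B) -> exists y, flow_sol c al be y.
Proof.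
elim: n => [|n IH] c al be Hn c0 Hs Hf.
  apply: flow0 => // i j; move: Hn; rewrite leqn0 cards_eq0 => /eqP/setP/(_ (i,j)).
  by rewrite !inE /= => /negbFE/eqP.
case: (pickP [pred p : I * J | c p.1 p.2 != 0%R]) => [[i0 j0] /= nz | allz]; last first.
  by apply: flow0 => // i j; have := allz (i,j); rewrite /= => /negbFE/eqP.
pose ce := c i0 j0.
pose th := \big[Order.min/ce]_(p : {set I} * {set J} | (i0 \notin p.1) && (j0 \in p.2))
             ff c al be p.1 p.2.
have th_le_ce : th <= ce by apply: bigmin_le_id.
have th_le (A : {set I}) (B : {set J}) : i0 \notin A -> j0 \in B -> th <= ff c al be A B.
  move=> h1 h2; apply: (@bigmin_le_cond _ R _ ce (A, B)
     (fun p : {set I} * {set J} => (i0 \notin p.1) && (j0 \in p.2))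
     (fun p => ff c al be p.1 p.2)); by rewrite /= h1 h2.
have th_ge0 : 0 <= th by apply: le_bigmin => [|p _]; [exact: c0 | exact: Hf].
have th_ge (A' : {set I}) (B' : {set J}) : i0 \in A' -> j0 \notin B' -> ce - ff c al be A' B' <= th.
  move=> g1 g2; apply: le_bigmin; first by have := Hf A' B'; lra.
  move=> [X Y] /andP [/= h3 h4].
  have := ff_submod al be c0 h3 h4 g1 g2.
  have := Hf (X :|: A') (Y :|: B'); have := Hf (X :&: A') (Y :&: B'); rewrite /ce; lra.
pose c' := fun i j => c i j - ce * (ind (i == i0) * ind (j == j0)).
pose al' := fun i => al i - th * ind (i == i0).
pose be' := fun j => be j - th * ind (j == j0).
have Hn' : (#|[set p : I * J | c' p.1 p.2 != 0%R]| <= n)%N.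
  apply: leq_trans (subset_leq_card (_ : _ \subset [set p : I * J | c p.1 p.2 != 0%R] :\ (i0,j0))) _.
    apply/subsetP => [[i j]]; rewrite !inE /= /c'.
    have [->|ni] := eqVneq i i0; have [->|nj] := eqVneq j j0.
    - by rewrite /ce !eqxx /= ?mulr1n !mulr1 subrr eqxx.
    - by rewrite /= ?mulr1n ?mulr0n mulr0 mulr0 subr0 xpair_eqE ?eqxx ?(negbTE nj).
    - by rewrite /= ?mulr1n ?mulr0n mul0r mulr0 subr0 xpair_eqE ?(negbTE ni).
    - by rewrite /= ?mulr0n mul0r mulr0 subr0 xpair_eqE ?(negbTE ni).
  by move: Hn; rewrite (cardsD1 (i0,j0)) inE /= nz add1n ltnS.
have c'0 i j : 0 <= c' i j.
  rewrite /c'; have [->|ni] := eqVneq i i0; have [->|nj] := eqVneq j j0;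
    rewrite /= ?mulr1n ?mulr0n ?(mulr0, mul0r, subr0) //.
  by rewrite /ce !mulr1 subrr.
have Hs' : \sum_i al' i = \sum_j be' j.
  rewrite /al' /be' !sumrB -!mulr_sumr !sum_delta1 Hs //.
have Hf' (A : {set I}) (B : {set J}) : 0 <= ff c' al' be' A B.
  rewrite /c' /al' /be' ff_upd.
  case hA: (i0 \in A); case hB: (j0 \in B) => /=.
  - have := Hf A B; lra.
  - have := th_ge A B hA (negbT hB); lra.
  - have := th_le A B (negbT hA) hB; lra.
  - have := Hf A B; lra.
have [y' [Hy1 Hy2 Hy3]] := IH c' al' be' Hn' c'0 Hs' Hf'.
exists (fun i j => y' i j + th * (ind (i == i0) * ind (j == j0))); split.
- move=> i j; have := Hy1 i j; rewrite /c'.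
  have [->|ni] := eqVneq i i0; have [->|nj] := eqVneq j j0;
    rewrite /= ?mulr1n ?mulr0n ?(mulr0, mul0r, mulr1, mul1r, addr0, subr0) /ce => /andP[h1 h2];
    move: th_le_ce th_ge0; rewrite /ce => t1 t2; apply/andP; split; lra.
- move=> i; rewrite big_split /= Hy2 /al'.
  have -> : \sum_j th * (ind (i == i0) * ind (j == j0)) = th * ind (i == i0) * \sum_j ind (j == j0).
    by rewrite mulr_sumr; apply: eq_bigr => j _; ring.
  rewrite sum_delta1; ring.
- move=> j; rewrite big_split /= Hy3 /be'.
  have -> : \sum_i th * (ind (i == i0) * ind (j == j0)) = th * ind (j == j0) * \sum_i ind (i == i0).
    by rewrite mulr_sumr; apply: eq_bigr => i _; ring.
  rewrite sum_delta1; ring.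
Qed.

End Flow.

Section Main.
Variable R : realType.
Notation ind b := ((nat_of_bool b)%:R : R).

Lemma sum_setT (T : finType) (F : T -> R) : \sum_(i in [set: T]) F i = \sum_i F i.
Proof. by rewrite sum_in; apply: eq_bigr => i _; rewrite in_setT mul1r. Qed.

Lemma measX (T1 T2 : finType) (lam : T1 * T2 -> R) (A : {set T1}) (B : {set T2}) :
  measT lam (setX A B) = \sum_t1 \sum_t2 ind (t1 \in A) * ind (t2 \in B) * lam (t1, t2).
Proof.
rewrite /measT sum_in pair_bigA /=; apply: eq_bigr => [[t1 t2]] _ /=.
by rewrite in_setX; case: (t1 \in A); case: (t2 \in B) => /=; ring.
Qed.

Lemma marg1_ge0 (T1 T2 : finType) (lam : T1 * T2 -> R) t :
  (forall t, 0 < lam t) -> 0 <= marg1 lam t.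
Proof. by move=> Hp; apply: sumr_ge0 => i _; apply: ltW. Qed.
Lemma marg2_ge0 (T1 T2 : finType) (lam : T1 * T2 -> R) t :
  (forall t, 0 < lam t) -> 0 <= marg2 lam t.
Proof. by move=> Hp; apply: sumr_ge0 => i _; apply: ltW. Qed.

Lemma necessity (K : finType) (k0 : K) (T1 T2 : finType)
  (lam : T1 * T2 -> R) (Q1 : K -> T1 -> R) (Q2 : K -> T2 -> R) :
  (forall t, 0 < lam t) ->
  (forall t1 t2, lam (t1, t2) = marg1 lam t1 * marg2 lam t2) ->
  implementable lam Q1 Q2 ->
   [/\ (forall k, k != k0 ->
          \sum_(t1 : T1) Q1 k t1 * marg1 lam t1
          - \sum_(t2 : T2) Q2 k t2 * marg2 lam t2 = 0),
       (forall k, k != k0 ->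
          (forall t1, 0 <= Q1 k t1) /\ (forall t2, 0 <= Q2 k t2)) &
       (forall (G : {set K}) (E1 : {set T1}) (E2 : {set T2}),
          G \subset [set~ k0] ->
          \sum_(k in G) (\sum_(t1 in E1) Q1 k t1 * marg1 lam t1
                          - \sum_(t2 in E2) Q2 k t2 * marg2 lam t2)
          <= measT lam (setX E1 (~: E2)))].
Proof.
move=> Hp Hprod [q [[q0 q1] [HQ1 HQ2]]].
have key k (E1 : {set T1}) (E2 : {set T2}) :
  \sum_(t1 in E1) Q1 k t1 * marg1 lam t1 - \sum_(t2 in E2) Q2 k t2 * marg2 lam t2
  = \sum_t1 \sum_t2 q k (t1, t2) * (ind (t1 \in E1) - ind (t2 \in E2)) * lam (t1, t2).
  rewrite !sum_in.
  under eq_bigr => t1 _ do rewrite HQ1 mulr_suml mulr_sumr.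
  under [X in _ - X]eq_bigr => t2 _ do rewrite HQ2 mulr_suml mulr_sumr.
  rewrite [X in _ - X]exchange_big /= -sumrB; apply: eq_bigr => t1 _.
  rewrite -sumrB; apply: eq_bigr => t2 _; rewrite Hprod; ring.
split.
- move=> k _; have := key k setT setT; rewrite !sum_setT => ->.
  by apply: big1 => t1 _; apply: big1 => t2 _; rewrite !in_setT subrr mulr0 mul0r.
- move=> k _; split => t.
    by rewrite HQ1; apply: sumr_ge0 => t2 _; apply: mulr_ge0 => //; apply: marg2_ge0.
  by rewrite HQ2; apply: sumr_ge0 => t1 _; apply: mulr_ge0 => //; apply: marg1_ge0.
- move=> G E1 E2 _.
  under eq_bigr => k _ do rewrite key.
  rewrite measX exchange_big /=; apply: ler_sum => t1 _.
  rewrite exchange_big /=; apply: ler_sum => t2 _.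
  rewrite -!mulr_suml.
  have s0 : 0 <= \sum_(k in G) q k (t1, t2) by apply: sumr_ge0.
  have s1 : \sum_(k in G) q k (t1, t2) <= 1.
    rewrite -(q1 (t1, t2)) sum_in; apply: ler_sum => k _.
    by case: (k \in G) => /=; rewrite ?mul1r ?mul0r ?lexx.
  have l0 := Hp (t1, t2).
  rewrite in_setC; case: (t1 \in E1); case: (t2 \in E2) => /=; nra.
Qed.
End Main.

Section Suf.
Variable R : realType.
Notation ind b := ((nat_of_bool b)%:R : R).

Lemma sumG (K T1 T2 : finType) (G : {set K}) (E1 : {set T1}) (E2 : {set T2})
   (X : K -> T1 -> R) (Y : K -> T2 -> R) :
  \sum_(k in G) (\sum_(t in E1) X k t - \sum_(t in E2) Y k t) =
  \sum_k \sum_t ind (k \in G) * ind (t \in E1) * X k t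
  - \sum_k \sum_t ind (k \in G) * ind (t \in E2) * Y k t.
Proof.
rewrite sum_in -sumrB; apply: eq_bigr => k _.
rewrite !sum_in mulrBr !mulr_sumr; congr (_ - _); apply: eq_bigr => t _; ring.
Qed.

Lemma measX1 (T1 T2 : finType) (lam : T1 * T2 -> R) (a : T1) (B : {set T2}) :
  measT lam (setX [set a] B) = \sum_t ind (t \in B) * lam (a, t).
Proof.
rewrite measX.
under eq_bigr => t1 _ do (under eq_bigr => t _ do rewrite in_set1 -mulrA; rewrite -mulr_sumr).
by rewrite (sum_delta (fun t1 => \sum_t ind (t \in B) * lam (t1, t))).
Qed.

Lemma sumT2 (T : finType) (u v : T) (F : T -> R) : u != v -> (forall t, (t == u) || (t == v)) ->
  \sum_t F t = F u + F v.
Proof.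
move=> uv cov; rewrite (bigD1 u) //= (bigD1 v) /=; last by rewrite eq_sym.
rewrite big1 ?addr0 // => t /andP [h1 h2]; have := cov t.
by rewrite (negbTE h1) (negbTE h2).
Qed.


Lemma sum_set1_ind (T : finType) (a : T) (c : R) (F : T -> R) :
  \sum_t c * ind (t \in [set a]) * F t = c * F a.
Proof.
transitivity (\sum_t ind (t == a) * (c * F t)); last exact: (sum_delta (fun t => c * F t)).
by apply: eq_bigr => t _; rewrite in_set1; ring.
Qed.

Lemma suff2 (K : finType) (k0 : K) (T1 T2 : finType) (u v : T1)
  (lam : T1 * T2 -> R) (Q1 : K -> T1 -> R) (Q2 : K -> T2 -> R) :
  u != v -> (forall t, (t == u) || (t == v)) -> (0 < #|T2|)%N ->
  (forall t, 0 < lam t) ->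
  \sum_(t : T1 * T2) lam t = 1 ->
  (forall t1 t2, lam (t1, t2) = marg1 lam t1 * marg2 lam t2) ->
  (forall t1, \sum_(k : K) Q1 k t1 = 1) ->
  (forall t2, \sum_(k : K) Q2 k t2 = 1) ->
  (forall k, k != k0 -> \sum_(t1 : T1) Q1 k t1 * marg1 lam t1
                        - \sum_(t2 : T2) Q2 k t2 * marg2 lam t2 = 0) ->
  (forall k, k != k0 -> (forall t1, 0 <= Q1 k t1) /\ (forall t2, 0 <= Q2 k t2)) ->
  (forall (G : {set K}) (E1 : {set T1}) (E2 : {set T2}), G \subset [set~ k0] ->
     \sum_(k in G) (\sum_(t1 in E1) Q1 k t1 * marg1 lam t1
                    - \sum_(t2 in E2) Q2 k t2 * marg2 lam t2)
     <= measT lam (setX E1 (~: E2))) ->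
  implementable lam Q1 Q2.
Proof.
move=> uv cov /card_gt0P [w _] Hp Hsum Hprod HQ1 HQ2 Ha Hb Hc.
pose l1 := marg1 lam; pose l2 := marg2 lam.
have sT1 := sumT2 _ uv cov.
have l1pos t1 : 0 < l1 t1.
  rewrite /l1 /marg1 (bigD1 w) //=; have := Hp (t1, w).
  have : 0 <= \sum_(i | i != w) lam (t1, i) by apply: sumr_ge0 => i _; apply: ltW.
  lra.
have l2pos t2 : 0 < l2 t2.
  rewrite /l2 /marg2 (bigD1 u) //=; have := Hp (u, t2).
  have : 0 <= \sum_(i | i != u) lam (i, t2) by apply: sumr_ge0 => i _; apply: ltW.
  lra.
have sl1 : l1 u + l1 v = 1.
  by rewrite -sT1 /l1 /marg1 pair_bigA -Hsum; apply: eq_bigr => [[a b]].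
have sl2 : \sum_t l2 t = 1.
  by rewrite /l2 /marg2 exchange_big pair_bigA -Hsum; apply: eq_bigr => [[a b]].
have Ak k : k != k0 -> \sum_t1 Q1 k t1 * l1 t1 - \sum_t2 Q2 k t2 * l2 t2 = 0 by apply: Ha.
have Aall k : \sum_t1 Q1 k t1 * l1 t1 = \sum_t2 Q2 k t2 * l2 t2.
  have [->|nk] := eqVneq k k0; last by apply/eqP; rewrite -subr_eq0; apply/eqP; exact: Ak.
  have tot : \sum_k (\sum_t1 Q1 k t1 * l1 t1 - \sum_t2 Q2 k t2 * l2 t2) = 0.
    rewrite sumrB exchange_big [X in _ - X]exchange_big /=.
    under eq_bigr => t1 _ do rewrite -mulr_suml HQ1 mul1r.
    under [X in _ - X]eq_bigr => t2 _ do rewrite -mulr_suml HQ2 mul1r.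
    by rewrite sl2 sT1 sl1 subrr.
  move: tot; rewrite (bigD1 k0) //= [X in _ + X]big1 ?addr0; last by move=> k1 nk1; apply: Ak.
  by move=> h; apply/eqP; rewrite -subr_eq0 h.
have Q2ge k t2 : 0 <= Q2 k t2.
  have [->|nk] := eqVneq k k0; last by case: (Hb k nk).
  have := Hc [set~ k0] setT [set~ t2] (subxx _).
  rewrite measX.
  have -> : \sum_t1 \sum_t ind (t1 \in [set: T1]) * ind (t \in ~: [set~ t2]) * lam (t1, t)
            = l2 t2.
    rewrite /l2 /marg2; apply: eq_bigr => t1 _.
    under eq_bigr => t _ do rewrite in_setT in_setC in_setC1 negbK mul1r.
    exact: (sum_delta (fun t => lam (t1, t))).
  have E kk : \sum_(t1 in [set: T1]) Q1 kk t1 * marg1 lam t1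
             - \sum_(t in [set~ t2]) Q2 kk t * marg2 lam t = Q2 kk t2 * l2 t2.
    rewrite sum_setT Aall (bigD1 t2) //= sum_in.
    have -> : \sum_(i | i != t2) Q2 kk i * l2 i = \sum_i ind (i \in [set~ t2]) * (Q2 kk i * l2 i).
      rewrite big_mkcond; apply: eq_bigr => i _; rewrite in_setC1.
      by case: (i != t2) => /=; rewrite ?mul1r ?mul0r.
    by rewrite addrK.
  under eq_bigr => kk _ do rewrite E.
  rewrite -mulr_suml => H.
  have H2 : \sum_(k in [set~ k0]) Q2 k t2 <= 1.
    have := l2pos t2; nra.
  have : \sum_k Q2 k t2 = Q2 k0 t2 + \sum_(k in [set~ k0]) Q2 k t2.
    rewrite (bigD1 k0) //=; congr (_ + _); apply: eq_bigl => kk; by rewrite in_setC1.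
  rewrite HQ2; lra.
pose c := fun k t => Q2 k t * l2 t.
pose al := fun k => Q1 k u * l1 u.
pose be := fun t => lam (u, t).
have c0 k t : 0 <= c k t by apply: mulr_ge0 => //; apply: ltW.
have Hs : \sum_k al k = \sum_t be t.
  by rewrite /al -mulr_suml HQ1 mul1r.
pose LF (F : {set T2}) := \sum_t ind (t \in F) * l2 t.
pose LnF (F : {set T2}) := \sum_t ind (t \notin F) * l2 t.
have LFn (F : {set T2}) : LF F + LnF F = 1.
  rewrite -sl2 -big_split; apply: eq_bigr => t _ /=; case: (t \in F) => /=; ring.
have Eb (F : {set T2}) : \sum_t ind (t \in F) * be t = l1 u * LF F.
  rewrite /LF mulr_sumr; apply: eq_bigr => t _; rewrite /be Hprod; rewrite /l1 /l2; ring.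
have Hff (G : {set K}) (F : {set T2}) : 0 <= ff c al be G F.
  rewrite /ff Eb.
  have [k0G|nk0G] := boolP (k0 \in G); last first.
    have sub : G \subset [set~ k0].
      apply/subsetP => k kG; rewrite in_setC1; apply: contraNneq nk0G => <-; exact: kG.
    have := Hc G [set u] (~: F) sub.
    rewrite sumG measX1 setCK -/l1 -/l2.
    under eq_bigr => k _ do rewrite sum_set1_ind.
    under [X in _ - X <= _]eq_bigr => k _ do under eq_bigr => t _ do rewrite in_setC.
    rewrite Eb /al /c; lra.
  pose H := ~: G.
  have sub : H \subset [set~ k0].
    by apply/subsetP => k; rewrite /H in_setC in_setC1; apply: contraNneq => ->.
  have := Hc H [set v] F sub.
  rewrite sumG measX1 -/l1 -/l2.
  under eq_bigr => k _ do rewrite sum_set1_ind.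
  have -> : \sum_t ind (t \in ~: F) * lam (v, t) = l1 v * LnF F.
    rewrite /LnF mulr_sumr; apply: eq_bigr => t _; rewrite Hprod in_setC /l1 /l2; ring.
  have AH : \sum_k ind (k \in H) * (Q1 k u * l1 u) + \sum_k ind (k \in H) * (Q1 k v * l1 v)
      = \sum_k \sum_t ind (k \in H) * ind (t \in F) * (Q2 k t * l2 t)
        + \sum_k \sum_t ind (k \in H) * ind (t \notin F) * (Q2 k t * l2 t).
    rewrite -!big_split; apply: eq_bigr => k _ /=; rewrite -big_split /=.
    rewrite -mulrDr; have := Aall k; rewrite sT1 => ->.
    rewrite mulr_sumr; apply: eq_bigr => t _; case: (t \in F) => /=; ring.
  have GA : \sum_k ind (k \in G) * (Q1 k u * l1 u) = l1 u - \sum_k ind (k \in H) * (Q1 k u * l1 u).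
    have E : \sum_k Q1 k u * l1 u = l1 u by rewrite -mulr_suml HQ1 mul1r.
    have S : \sum_k ind (k \in G) * (Q1 k u * l1 u) + \sum_k ind (k \in H) * (Q1 k u * l1 u)
             = \sum_k Q1 k u * l1 u.
      rewrite -big_split; apply: eq_bigr => k _ /=.
      rewrite /H in_setC; case: (k \in G) => /=; ring.
    lra.
  have GB : \sum_k \sum_t ind (k \in G) * ind (t \notin F) * c k t
            = LnF F - \sum_k \sum_t ind (k \in H) * ind (t \notin F) * (Q2 k t * l2 t).
    have -> : LnF F = \sum_k \sum_t ind (t \notin F) * (Q2 k t * l2 t).
      rewrite exchange_big /LnF; apply: eq_bigr => t _ /=.
      have E : l2 t = \sum_k Q2 k t * l2 t by rewrite -mulr_suml HQ2 mul1r.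
      rewrite [in LHS]E mulr_sumr; apply: eq_bigr => k _; ring.
    rewrite -sumrB; apply: eq_bigr => k _; rewrite -sumrB; apply: eq_bigr => t _.
    rewrite /H /c in_setC; case: (k \in G) => /=; ring.
  rewrite GA GB /al.
  move: AH; have := LFn F; have := sl1; have := l1pos u; have := l1pos v.
  move: (LF F) (LnF F) (l1 u) (l1 v) => a b x y.
  nra.
have [y [Hy0 Hy1 Hy2]] := flow (leqnn _) c0 Hs Hff.
have l1n t : marg1 lam t != 0 by have := l1pos t; rewrite /l1 => h; rewrite gt_eqF.
have l2n t : marg2 lam t != 0 by have := l2pos t; rewrite /l2 => h; rewrite gt_eqF.
have lamn t : lam t != 0 by rewrite gt_eqF.
have vu : (v == u) = false by apply/negbTE; rewrite eq_sym.
have sc t2 : \sum_k c k t2 = l2 t2 by rewrite /c -mulr_suml HQ2 mul1r.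
exists (fun k (p : T1 * T2) => (if p.1 == u then y k p.2 else c k p.2 - y k p.2) / lam p).
split; [split|split].
- move=> k [t1 t2] /=; apply: divr_ge0; last exact: ltW.
  by case: (t1 == u); have := Hy0 k t2; move/andP => [h1 h2]; lra.
- move=> [t1 t2] /=; rewrite -mulr_suml.
  have [->|ne] := eqVneq t1 u.
    by rewrite Hy2 /be mulfV.
  rewrite /=.
  have /eqP -> : t1 == v by have := cov t1; rewrite (negbTE ne).
  rewrite sumrB Hy2 sc /be.
  have -> : l2 t2 - lam (u, t2) = lam (v, t2).
    rewrite !Hprod; have := sl1; rewrite /l1 /l2 => h.
    have -> : marg1 lam v = 1 - marg1 lam u by lra.
    ring.
  by rewrite mulfV.
- move=> k t1; have [->|ne] := eqVneq t1 u.
    transitivity (\sum_t2 y k t2 / l1 u).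
      by rewrite -mulr_suml Hy1 /al /l1 mulfK.
    apply: eq_bigr => t2 _ /=; rewrite Hprod /l1 /l2; field.
    by rewrite l1n l2n.
  have Et : t1 = v by apply/eqP; have := cov t1; rewrite (negbTE ne).
  rewrite Et; transitivity (\sum_t2 (c k t2 - y k t2) / l1 v); last first.
    apply: eq_bigr => t2 _ /=; rewrite ?vu /= Hprod /l1 /l2; field.
    by rewrite l1n l2n.
  rewrite -mulr_suml sumrB Hy1 /al.
  have := Aall k; rewrite sT1 => h.
  have -> : \sum_t c k t = Q1 k u * l1 u + Q1 k v * l1 v by rewrite h.
  rewrite /l1; field; exact: l1n.
- move=> k t2; rewrite sT1 /= eqxx vu !Hprod /c /l2; field.
  by rewrite l1n l2n l1n.
Qed.

End Suf.


Lemma two_elems (T : finType) : #|T| = 2%N ->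
  exists u v : T, u != v /\ (forall t, (t == u) || (t == v)).
Proof.
move=> H; have Hs : size (enum T) = 2%N by rewrite -cardE.
case E: (enum T) Hs => [|u [|v [|? ?]]] // _.
exists u, v; split.
  by have := enum_uniq T; rewrite E /= inE andbT.
by move=> t; have := mem_enum T t; rewrite E !inE ?orbF => ->.
Qed.

Lemma sumC (R : realType) (T : finType) (A : {set T}) (F : T -> R) :
  \sum_(t in A) F t + \sum_(t in ~: A) F t = \sum_t F t.
Proof.
rewrite !sum_in -big_split; apply: eq_bigr => t _ /=; rewrite in_setC.
by case: (t \in A) => /=; ring.
Qed.


End Aux.
Import Aux.

Theorem theorem1 (R : realType) (K : finType) (k0 : K) (T1 T2 : finType)
  (lam : T1 * T2 -> R) (Q1 : K -> T1 -> R) (Q2 : K -> T2 -> R) :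
  minn #|T1| #|T2| = 2%N ->
  (forall t, 0 < lam t) ->
  \sum_(t : T1 * T2) lam t = 1 ->
  (forall t1 t2, lam (t1, t2) = marg1 lam t1 * marg2 lam t2) ->
  (forall t1, \sum_(k : K) Q1 k t1 = 1) ->
  (forall t2, \sum_(k : K) Q2 k t2 = 1) ->
  (implementable lam Q1 Q2 <->
   [/\ (forall k, k != k0 ->
          \sum_(t1 : T1) Q1 k t1 * marg1 lam t1
          - \sum_(t2 : T2) Q2 k t2 * marg2 lam t2 = 0),
       (forall k, k != k0 ->
          (forall t1, 0 <= Q1 k t1) /\ (forall t2, 0 <= Q2 k t2)) &
       (forall (G : {set K}) (E1 : {set T1}) (E2 : {set T2}),
          G \subset [set~ k0] ->
          \sum_(k in G) (\sum_(t1 in E1) Q1 k t1 * marg1 lam t1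
                          - \sum_(t2 in E2) Q2 k t2 * marg2 lam t2)
          <= measT lam (setX E1 (~: E2)))]).
Proof.
move=> Hmin Hp Hsum Hprod HQ1 HQ2; split; first exact: necessity.
move=> [Ha Hb Hc].
case: (leqP #|T1| #|T2|) => hle.
  have c1 : #|T1| = 2%N by move: Hmin; rewrite (minn_idPl hle).
  have [u [v [uv cov]]] := two_elems c1.
  by apply: (suff2 (k0 := k0) uv cov) => //; lia.
have c2 : #|T2| = 2%N by move: Hmin; rewrite (minn_idPr (ltnW hle)).
have [u [v [uv cov]]] := two_elems c2.
pose lam' := fun p : T2 * T1 => lam (p.2, p.1).
have m1 : marg1 lam' = marg2 lam by [].
have m2 : marg2 lam' = marg1 lam by [].
have Hsum' : \sum_(t : T2 * T1) lam' t = 1.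
  rewrite -Hsum -(pair_bigA _ (fun t2 t1 => lam' (t2, t1))) exchange_big pair_bigA /=.
  by apply: eq_bigr => [[a b]].
have Hprod' t2 t1 : lam' (t2, t1) = marg1 lam' t2 * marg2 lam' t1.
  by rewrite m1 m2 /lam' /= Hprod mulrC.
have [] := @suff2 R K k0 T2 T1 u v lam' Q2 Q1 uv cov ltac:(lia) (fun t => Hp (t.2, t.1))
  Hsum' Hprod' HQ2 HQ1.
- by move=> k nk; rewrite m1 m2; have := Ha k nk; lra.
- by move=> k nk; have [h1 h2] := Hb k nk; split.
- move=> G E1 E2 sub; rewrite m1 m2.
  have := Hc G (~: E2) (~: E1) sub.
  have -> : measT lam' (setX E1 (~: E2)) = measT lam (setX (~: E2) (~: ~: E1)).
    rewrite !measX setCK exchange_big; apply: eq_bigr => t1 _; apply: eq_bigr => t2 _.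
    rewrite /lam' /=; ring.
  suff -> : \sum_(k in G) (\sum_(t1 in E1) Q2 k t1 * marg2 lam t1 - \sum_(t2 in E2) Q1 k t2 * marg1 lam t2)
    = \sum_(k in G) (\sum_(t1 in ~: E2) Q1 k t1 * marg1 lam t1 - \sum_(t2 in ~: E1) Q2 k t2 * marg2 lam t2) by [].
  apply: eq_bigr => k kG.
  have nk : k != k0 by move/subsetP: sub => /(_ k kG); rewrite in_setC1.
  have := Ha k nk; have := sumC E1 (fun t => Q2 k t * marg2 lam t).
  have := sumC E2 (fun t => Q1 k t * marg1 lam t); lra.
- move=> q [[q0 q1] [H1 H2]].
  exists (fun k p => q k (p.2, p.1)); split; [split|split].
  + by move=> k t; apply: q0.
  + by move=> t; apply: q1.
  + by move=> k t1; rewrite H2.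
  + by move=> k t2; rewrite H1.
Qed.
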